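(* Let $\mathcal{F}=\{f_i\}_{i=1}^n$ be a basis for $\mathbb{R}^n$ and let $k$ be a positive integer. Then there exists a $k$-dimensional maximal $\mathcal{F}$-PR subspace if and only if $1\le k\le[(n+1)/2]$, where $[a]$ denotes the integer part of $a$.
   Context: A finite sequence $\{g_i\}$ in a subspace $M\subseteq\mathbb{R}^n$ is a phase-retrievable frame for $M$ if it spans $M$ and whenever $x,y\in M$ satisfy $|\langle x,g_i\rangle|=|\langle y,g_i\rangle|$ for all $i$, then $x=\pm y$. For a finite sequence $\mathcal{F}=\{f_i\}_{i=1}^N$ spanning $\mathbb{R}^n$, a subspace $M$ is an $\mathcal{F}$-PR subspace (phase-retrievable subspace with respect to $\mathcal{F}$) if $\{P_Mf_i\}_{i=1}^N$ is a phase-retrievable frame for $M$, where $P_M$ is the orthogonal projection onto $M$. An $\mathcal{F}$-PR subspace is maximal if it is not a proper subspace of another $\mathcal{F}$-PR subspace. *)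

(* Defs.v *)
(* vectors of R^n are row vectors 'rV[R]_n over R : realType;
   subspaces of R^n are represented by square matrices 'M[R]_n through their
   row space (mxalgebra). *)
From HB Require Import structures.
From mathcomp Require Import all_boot all_order all_algebra.
From mathcomp Require Import reals.
Set Implicit Arguments. Unset Strict Implicit. Unset Printing Implicit Defensive.
Import Order.TTheory GRing.Theory Num.Theory.
Local Open Scope ring_scope.

Section PR.
Variable R : realType.
Variable n : nat.

Definition dotv (x y : 'rV[R]_n) : R := \sum_(j < n) x 0 j * y 0 j.

Definition orth_proj_mx (M : 'M[R]_n) : 'M[R]_n :=
  let B := row_base M in (B^T *m invmx (B *m B^T)) *m B.

Definition orth_proj (M : 'M[R]_n) (x : 'rV[R]_n) : 'rV[R]_n :=
  x *m orth_proj_mx M.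

Definition PR_frame (N : nat) (M : 'M[R]_n) (g : 'I_N -> 'rV[R]_n) : Prop :=
  [/\ (forall i, (g i <= M)%MS),
      ((\matrix_(i < N) g i) == M)%MS
    & forall x y : 'rV[R]_n, (x <= M)%MS -> (y <= M)%MS ->
        (forall i, `|dotv x (g i)| = `|dotv y (g i)|) -> x = y \/ x = - y].

Definition F_PR_subspace (N : nat) (f : 'I_N -> 'rV[R]_n) (M : 'M[R]_n) : Prop :=
  PR_frame M (fun i => orth_proj M (f i)).

Definition maximal_F_PR_subspace (N : nat) (f : 'I_N -> 'rV[R]_n)
    (M : 'M[R]_n) : Prop :=
  F_PR_subspace f M /\
  ~ (exists M' : 'M[R]_n, F_PR_subspace f M' /\ (M < M')%MS).

Definition is_basis (f : 'I_n -> 'rV[R]_n) : Prop :=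
  row_free (\matrix_(i < n) f i) /\ row_full (\matrix_(i < n) f i).

End PR.

(* Main.v *)
Require Import Defs.
From HB Require Import structures.
From mathcomp Require Import all_boot all_order all_algebra.
From mathcomp Require Import reals lra zify.
Import Order.TTheory GRing.Theory Num.Theory.
Local Open Scope ring_scope.
Set Implicit Arguments. Unset Strict Implicit. Unset Printing Implicit Defensive.
Section Proj.
Variables (R : realType) (n : nat).

Lemma dotvE (x y : 'rV[R]_n) : dotv x y = (x *m y^T) 0 0.
Proof. by rewrite /dotv mxE; apply: eq_bigr => j _; rewrite mxE. Qed.

Variable M : 'M[R]_n.
Let B := row_base M.

Lemma unit_BBt : B *m B^T \in unitmx.
Proof.
rewrite -row_free_unit; apply: inj_row_free => v Hv.
have H0 : (v *m B) *m (v *m B)^T = 0.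
  by rewrite trmx_mul mulmxA -(mulmxA v) Hv mul0mx.
have Hs : \sum_(j < n) (v *m B) 0 j * (v *m B) 0 j = 0.
  transitivity ((v *m B *m (v *m B)^T) 0 0); last by rewrite H0 mxE.
  rewrite [RHS]mxE; apply: eq_bigr => j _; by rewrite !mxE.
have Hz : v *m B = 0.
  apply/rowP => j; rewrite [RHS]mxE.
  have := @psumr_eq0P R _ xpredT (fun j => (v *m B) 0 j * (v *m B) 0 j)
    (fun j _ => ltac:(by rewrite /= -expr2 sqr_ge0)) Hs j isT.
  by move/eqP; rewrite mulf_eq0 orbb => /eqP.
by apply/eqP; rewrite -(mulmx_free_eq0 _ (row_base_free M)); apply/eqP.
Qed.

Lemma BP : B *m orth_proj_mx M = B.
Proof.
by rewrite /orth_proj_mx -/B !mulmxA (mulmxV unit_BBt) mul1mx.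
Qed.

Lemma proj_id (x : 'rV[R]_n) : (x <= M)%MS -> x *m orth_proj_mx M = x.
Proof.
move=> Hx; have : (x <= B)%MS by rewrite eq_row_base.
by case/submxP => D ->; rewrite -mulmxA BP.
Qed.

Lemma P_sym : (orth_proj_mx M)^T = orth_proj_mx M.
Proof.
rewrite /orth_proj_mx -/B; set C := invmx _.
have HC : C^T = C by rewrite /C trmx_inv (trmx_mul B B^T) trmxK.
rewrite (trmx_mul (B^T *m C) B) (trmx_mul B^T C) trmxK HC.
by rewrite !mulmxA.
Qed.

Lemma dot_proj (x y : 'rV[R]_n) : (x <= M)%MS ->
  dotv x (orth_proj M y) = dotv x y.
Proof.
move=> Hx; rewrite !dotvE /orth_proj trmx_mul P_sym mulmxA proj_id //.
Qed.

Lemma proj_sub (y : 'rV[R]_n) : (orth_proj M y <= M)%MS.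
Proof.
rewrite /orth_proj /orth_proj_mx -/B mulmxA.
by apply: submx_trans (submxMl _ _) _; rewrite eq_row_base.
Qed.

Lemma P_eq : (orth_proj_mx M == M)%MS.
Proof.
apply/andP; split.
  rewrite /orth_proj_mx -/B; apply: submx_trans (submxMl _ _) _.
  by rewrite eq_row_base.
rewrite -(eq_row_base M) -/B -{1}BP; exact: submxMl.
Qed.
End Proj.


Section Coord.
Variables (R : realType) (n : nat) (f : 'I_n -> 'rV[R]_n).
Let F := \matrix_(i < n) f i.
Let G := F^T.

Lemma dot_coord (x : 'rV[R]_n) i : dotv x (f i) = (x *m G) 0 i.
Proof. by rewrite /dotv mxE; apply: eq_bigr => j _; rewrite !mxE. Qed.

Lemma PR_coord (M : 'M[R]_n) : F_PR_subspace f M ->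
  forall x y : 'rV[R]_n, (x <= M)%MS -> (y <= M)%MS ->
  (forall i, `|(x *m G) 0 i| = `|(y *m G) 0 i|) -> x = y \/ x = - y.
Proof.
case=> _ _ H x y Hx Hy Hn; apply: H => // i.
by rewrite !dot_proj // !dot_coord.
Qed.

Lemma coord_PR (M : 'M[R]_n) : is_basis f ->
  (forall x y : 'rV[R]_n, (x <= M)%MS -> (y <= M)%MS ->
  (forall i, `|(x *m G) 0 i| = `|(y *m G) 0 i|) -> x = y \/ x = - y) ->
  F_PR_subspace f M.
Proof.
case=> _ Hfull H; split.
- by move=> i; exact: proj_sub.
- have -> : \matrix_(i < n) orth_proj M (f i) = F *m orth_proj_mx M.
    by apply/matrixP => i j; rewrite !mxE; apply: eq_bigr => l _; rewrite !mxE.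
  rewrite !(eqmxMfull _ Hfull); exact: P_eq.
- move=> x y Hx Hy Hn; apply: H => // i.
  by rewrite -!dot_coord -(dot_proj _ Hx) -(dot_proj _ Hy).
Qed.

Lemma opp_self (w : 'rV[R]_n) : w = - w -> w = 0.
Proof.
move=> E; apply/rowP => j; have := congr1 (fun A : 'rV[R]_n => A 0 j) E.
rewrite /= !mxE => E'; lra.
Qed.

Lemma disjoint_pair (M : 'M[R]_n) (u v : 'rV[R]_n) : F_PR_subspace f M ->
  (u <= M)%MS -> (v <= M)%MS -> u != 0 -> v != 0 ->
  (forall j, (u *m G) 0 j * (v *m G) 0 j = 0) -> False.
Proof.
move=> HPR Hu Hv Hu0 Hv0 Hd.
have Hs1 : ((u + v)%R <= M)%MS by apply: addmx_sub.
have Hs2 : ((u - v)%R <= M)%MS by apply: addmx_sub; rewrite ?eqmx_opp.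
have Hn : forall i, `|((u + v) *m G) 0 i| = `|((u - v) *m G) 0 i|.
  move=> i; have /eqP := Hd i; rewrite mulf_eq0 => Hor.
  rewrite mulmxDl mulmxBl; move: Hor; set uG := u *m G; set vG := v *m G.
  rewrite !mxE => /orP[] /eqP ->.
    by rewrite add0r sub0r normrN.
  by rewrite addr0 subr0.
have [E|E] := PR_coord HPR Hs1 Hs2 Hn.
- move/eqP: Hv0; apply; apply: opp_self.
  by move/addrI: E.
- move/eqP: Hu0; apply; apply: opp_self.
  by move: E; rewrite opprB addrC => /addrI.
Qed.

Lemma ker_gen (X : 'M[R]_n) p (Z : 'M[R]_(n, p)) : (\rank Z < \rank X)%N ->
  exists w : 'rV[R]_n, w *m X != 0 /\ w *m Z = 0.
Proof.
move=> Hr.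
have HK : ~~ (kermx Z <= kermx X)%MS.
  apply/negP => /mxrankS; rewrite !mxrank_ker.
  have := rank_leq_col X; lia.
case/row_subPn: HK => i Hi; exists (row i (kermx Z)); split.
  by rewrite -sub_kermx.
by rewrite -row_mul mulmx_ker row0.
Qed.

Lemma kernel_vec (M' : 'M[R]_n) (a b : nat) : (b - a < \rank M')%N ->
  exists v : 'rV[R]_n, [/\ (v <= M')%MS, v != 0 &
    forall j : 'I_n, (a <= j < b)%N -> (v *m G) 0 j = 0].
Proof.
move=> Hr.
pose E : 'M[R]_(n, b - a) := \matrix_(j, l) ((j == (a + l)%N :> nat)%:R).
have [w [Hw Hz]] : exists w : 'rV[R]_n, w *m M' != 0 /\ w *m (M' *m G *m E) = 0.
  apply: ker_gen; apply: leq_ltn_trans Hr; exact: rank_leq_col.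
exists (w *m M'); split => //; first exact: submxMl.
move=> j /andP[Haj Hjb].
have HE : forall j l, E j l = (j == (a + l)%N :> nat)%:R by move=> *; rewrite mxE.
have Hl : (j - a < b - a)%N by lia.
have := congr1 (fun A : 'rV[R]_(b - a) => A 0 (Ordinal Hl)) Hz.
rewrite /= !mulmxA [X in X = _]mxE [RHS]mxE (bigD1 j) //= big1 => [|j' Hj'].
  by rewrite HE /= subnKC // eqxx mulr1 addr0.
rewrite HE /= subnKC //.
by move: Hj'; rewrite -val_eqE => /negbTE ->; rewrite mulr0.
Qed.
End Coord.

Section Poly.
Variables (R : realType) (n' k : nat).
Local Notation n := n'.+1.
Hypothesis Hk : (0 < k)%N.
Hypothesis H2k : (k + k <= n.+1)%N.

Definition A0 : 'M[R]_n :=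
  \matrix_(i, j) (if ((i < k) && (j < k + k - 1))%N then (j%:R) ^+ i else 0).

Definition pw (w : 'rV[R]_n) : {poly R} := \poly_(i < k) w 0 (inord i).

Lemma A0_coord (w : 'rV[R]_n) (j : 'I_n) :
  (w *m A0) 0 j = if (j < k + k - 1)%N then (pw w).[j%:R] else 0.
Proof.
rewrite mxE horner_poly; case: ifP => Hj.
  have Hkn : (k <= n)%N by lia.
  rewrite (big_ord_widen n (fun i => w 0 (inord i) * (j%:R) ^+ i) Hkn).
  rewrite [RHS]big_mkcond /=; apply: eq_bigr => i _; rewrite mxE Hj andbT.
  by case: ifP => _; rewrite ?inord_val ?mulr0.
by apply: big1 => i _; rewrite mxE Hj andbF mulr0.
Qed.

Lemma roots0 (q : {poly R}) : (size q <= k + k - 1)%N ->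
  (forall j, (j < k + k - 1)%N -> q.[j%:R] = 0) -> q = 0.
Proof.
move=> Hs H; case: (eqVneq q 0) => // Hq.
have := max_poly_roots Hq (rs := [seq (j%:R : R) | j <- iota 0 (k + k - 1)]).
rewrite size_map size_iota.
have -> : all (root q) [seq (j%:R : R) | j <- iota 0 (k + k - 1)].
  apply/allP => x /mapP [j Hj ->]; rewrite /root; apply/eqP; apply: H.
  by rewrite mem_iota in Hj; lia.
rewrite map_inj_uniq ?iota_uniq; first by move=> /(_ isT isT); rewrite ltnNge Hs.
by move=> x y /eqP; rewrite eqr_nat => /eqP.
Qed.

Lemma pw_size (w : 'rV[R]_n) : (size (pw w) <= k)%N.
Proof. exact: size_poly. Qed.

Lemma A0_pid : A0 = pid_mx k *m A0.
Proof.
apply/matrixP => i j; rewrite [RHS]mxE (bigD1 i) //= big1 => [|l Hl].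
  rewrite addr0 [pid_mx k i i]mxE eqxx /=.
  case: (ltnP i k) => Hik; first by rewrite mul1r.
  by rewrite mul0r mxE ltnNge Hik.
by move: Hl; rewrite [pid_mx k i l]mxE -val_eqE eq_sym => /negbTE ->; rewrite mul0r.
Qed.

Lemma rankA0 : \rank A0 = k.
Proof.
have Hkn : (k <= n)%N by lia.
apply/eqP; rewrite eqn_leq; apply/andP; split.
  by rewrite A0_pid; apply: leq_trans (mxrankM_maxl _ _) _; rewrite rank_pid_mx.
rewrite leqNgt; apply/negP => Hlt.
have [w [Hw Hz]] : exists w : 'rV[R]_n, w *m (pid_mx k : 'M[R]_n) != 0 /\ w *m A0 = 0.
  by apply: (@ker_gen R n (pid_mx k) n A0); rewrite rank_pid_mx.
have Hp : pw w = 0.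
  apply: roots0; first by apply: leq_trans (pw_size w) _; lia.
  move=> j Hj; have Hjn : (j < n)%N by lia.
  have := A0_coord w (Ordinal Hjn); rewrite /= Hj Hz mxE => <- //.
move/eqP: Hw; apply; apply/rowP => j.
rewrite mxE (bigD1 j) //= big1 => [|l Hl]; last first.
  by move: Hl; rewrite [pid_mx k l j]mxE -val_eqE => /negbTE ->; rewrite mulr0.
rewrite mxE eqxx /= addr0 [RHS]mxE.
case: (ltnP j k) => Hjk; last by rewrite mulr0.
have := congr1 (fun p : {poly R} => p`_j) Hp.
by rewrite coef_poly Hjk inord_val coef0 mulr1.
Qed.

Lemma coordM (G : 'M[R]_n) (x : 'rV[R]_n) : G \in unitmx ->
  (x <= A0 *m invmx G)%MS -> exists w, x *m G = w *m A0.
Proof.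
move=> HG /submxP [D ->]; exists D.
by rewrite mulmxA mulmxKV.
Qed.

Lemma M_PR (G : 'M[R]_n) : G \in unitmx ->
  forall x y : 'rV[R]_n, (x <= A0 *m invmx G)%MS -> (y <= A0 *m invmx G)%MS ->
  (forall i, `|(x *m G) 0 i| = `|(y *m G) 0 i|) -> x = y \/ x = - y.
Proof.
move=> HG x y Hx Hy Hn.
have [wx Ex] := coordM HG Hx; have [wy Ey] := coordM HG Hy.
set p := pw wx; set q := pw wy.
have Hpq : (p - q) * (p + q) = 0.
  apply: roots0.
    apply: leq_trans (size_polyMleq _ _) _.
    have h1 : (size (p - q)%R <= k)%N.
      apply: leq_trans (size_polyD _ _) _; rewrite size_polyN geq_max.
      by rewrite !pw_size.
    have h2 : (size (p + q)%R <= k)%N.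
      apply: leq_trans (size_polyD _ _) _; rewrite geq_max.
      by rewrite !pw_size.
    lia.
  move=> j Hj; have Hjn : (j < n)%N by lia.
  have := Hn (Ordinal Hjn); rewrite Ex Ey !A0_coord /= Hj -/p -/q => Habs.
  rewrite hornerM hornerD hornerN.
  have : `|p.[j%:R]| ^+ 2 = `|q.[j%:R]| ^+ 2 by rewrite Habs.
  rewrite !real_normK ?num_real // => E.
  by rewrite hornerD -subr_sqr E subrr.
have HxG : forall c : R, (c = 1 \/ c = -1) -> p = c *: q ->
  x = c *: y.
  move=> c Hc Hpc.
  have : x *m G = c *: (y *m G).
    apply/rowP => j; rewrite Ex Ey [RHS]mxE !A0_coord -/p -/q Hpc.
    by case: ifP => _; rewrite ?hornerZ ?mulr0.
  by move=> E; rewrite -(mulmxK HG x) E -scalemxAl mulmxK.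
move/eqP: Hpq; rewrite mulf_eq0 => /orP[] /eqP E.
  left; rewrite -[y]scale1r; apply: HxG; first by left.
  by rewrite scale1r; apply/eqP; rewrite -subr_eq0 E.
right; rewrite -scaleN1r; apply: HxG; first by right.
by rewrite scaleN1r; apply/eqP; rewrite -subr_eq0 opprK E.
Qed.

End Poly.

Lemma only_if (R : realType) (n : nat) (f : 'I_n -> 'rV[R]_n) (M : 'M[R]_n) k :
  F_PR_subspace f M -> \rank M = k -> (0 < k)%N -> (k + k - 1 <= n)%N.
Proof.
move=> HPR Hr Hk; rewrite leqNgt; apply/negP => Hlt.
have [u [Hu Hu0 Hu1]] := @kernel_vec R n f M 0 (k - 1) ltac:(lia).
have [v [Hv Hv0 Hv1]] := @kernel_vec R n f M (k - 1) n ltac:(lia).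
apply: (disjoint_pair HPR Hu Hv Hu0 Hv0) => j.
case: (ltnP j (k - 1)) => Hj; first by rewrite Hu1 ?mul0r.
by rewrite Hv1 ?mulr0 // Hj ltn_ord.
Qed.

Unset Implicit Arguments.
Set Strict Implicit.

Theorem proposition3p1 (R : realType) (n : nat) (f : 'I_n -> 'rV[R]_n) (k : nat) :
  is_basis f -> (0 < k)%N ->
  ((exists M : 'M[R]_n, \rank M = k /\ maximal_F_PR_subspace f M) <->
   (1 <= k <= (n + 1) %/ 2)%N).
Proof.
move=> Hb Hk; split.
  case=> M [Hr [HPR _]]; have := only_if HPR Hr Hk => H.
  by rewrite Hk /= leq_divRL //; lia.
case/andP => _; rewrite leq_divRL // => Hk2.
have H2 : (k + k <= n.+1)%N by lia.
clear Hk2; case: n f Hb H2 => [|n'] f Hb H2; first by lia.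
set G := (\matrix_i f i)^T.
have HG : G \in unitmx by rewrite unitmx_tr -row_free_unit; case: Hb.
have HrM : \rank (A0 R n' k *m invmx G) = k.
  by rewrite mxrankMfree ?rankA0 // row_free_unit unitmx_inv.
exists (A0 R n' k *m invmx G); split => //; split.
  apply: coord_PR Hb _ => x y Hx Hy Hn; exact: (M_PR Hk H2 HG Hx Hy Hn).
case=> M' [HPR' Hlt].
have Hr' := rank_ltmx Hlt; rewrite HrM in Hr'.
have [u [Hu Hu0 Hu1]] := @kernel_vec R _ f (A0 R n' k *m invmx G) 0 (k - 1) ltac:(lia).
have [v [Hv Hv0 Hv1]] := @kernel_vec R _ f M' (k - 1) (k + k - 1) ltac:(lia).
apply: (disjoint_pair HPR' (submx_trans Hu (ltmxW Hlt)) Hv Hu0 Hv0) => j.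
case: (ltnP j (k - 1)) => Hj; first by rewrite Hu1 ?mul0r.
case: (ltnP j (k + k - 1)) => Hj2; first by rewrite Hv1 ?mulr0 // Hj Hj2.
have [w Ew] := coordM HG Hu.
by rewrite Ew A0_coord // ltnNge Hj2 /= mul0r.
Qed.
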